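(* Let $X$ be a proper geodesic metric space with a convergence compactification $(\partial X,[\cdot])$. Given $r\ge C>0$, there exist $\hat r=\hat r(r,C)$ and $L_0=L_0(r,C)$ with the following property. Given $L\ge L_0$ and $\theta\in(0,1]$, let $\gamma$ be a geodesic ray starting at a point $o\in X$ that is $(r,C,L)$-contracting at $\theta$-frequency, and assume its terminal class $[\gamma^+]$ consists of non-pinched points. Then every geodesic ray from $o$ ending at $[\gamma^+]$ is $(\hat r,C,L)$-contracting at $\theta$-frequency.
   Context: $\pi_A$ is nearest-point projection; a closed $U$ is $C$-contracting if every geodesic $\gamma$ with $d(\gamma,U)\ge C$ has $\mathrm{diam}(\pi_U(\gamma))\le C$. Convergence compactification: $\overline X=X\cup\partial X$ metrizable, $X$ open dense, isometries extend to homeomorphisms, $\partial X$ has an $\mathrm{Isom}(X)$-invariant partition $[\cdot]$. A sequence accumulates into $[\xi]$ if all its accumulation points lie in $[\xi]$; a ray ends at $[\xi]$ if every unbounded sequence of its points accumulates into $[\xi]$. Sets $A_n$ are escaping if $d(o,A_n)\to\infty$; $\Omega_o(A)=\{x:\mathrm{diam}([o,x]\cap A)\ge 10C\}$. Axioms: (A) each contracting geodesic ray accumulates into a closed class and sequences with escaping projections to it accumulate into that class; (B) for an escaping sequence of $C$-contracting quasi-geodesics $\gamma_n$, some subsequence $A_n$ of $\gamma_n\cup\Omega_o(\gamma_n)$ and some class $[\xi]$ satisfy: every convergent sequence $x_n\in A_n$ tends into $[\xi]$; (C) non-pinched points exist, where $\xi$ is non-pinched if whenever $x_n,y_n\in X$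 converge to $[\xi]$ the geodesic segments $[x_n,y_n]$ are escaping. A geodesic segment $\gamma$ is $(r,C,L)$-contracting at $\theta$-frequency if for every $0<t<(1-\theta)\ell(\gamma)$ there are an interval $[s-L/2,s+L/2]\subseteq[t,t+\theta\ell(\gamma)]$ and a $C$-contracting geodesic $p$ with $d(\gamma(u),p)\le r$ on that interval; a geodesic ray is so if there is $R_0$ such that every initial segment $\gamma[0,t]$, $t\ge R_0$, is. Such a ray (for $L$ large) accumulates into a single class $[\gamma^+]$. *)

(* Defs.v *)
From HB Require Import structures.
From mathcomp Require Import all_boot all_order all_algebra.
From mathcomp Require Import all_classical all_reals all_analysis.
Import numFieldTopology.Exports numFieldNormedType.Exports.
Set Implicit Arguments. Unset Strict Implicit. Unset Printing Implicit Defensive.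
Import Order.TTheory GRing.Theory Num.Theory.
Local Open Scope classical_set_scope.
Local Open Scope ring_scope.

Definition is_metric {R : realType} {X : Type} (d : X -> X -> R) : Prop :=
  (forall x y, d x y = 0 <-> x = y) /\
  (forall x y, d x y = d y x) /\
  (forall x y z, d x z <= d x y + d y z).

Definition dconv {R : realType} {X : Type} (d : X -> X -> R)
  (u : nat -> X) (y : X) : Prop :=
  (fun n => d (u n) y) @ \oo --> (0 : R).

Definition is_proper {R : realType} {X : Type} (d : X -> X -> R) : Prop :=
  forall (x : X) (r : R) (u : nat -> X), (forall n, d x (u n) <= r) ->
    exists (phi : nat -> nat) (y : X),
      (forall n, (phi n < phi n.+1)%N) /\ d x y <= r /\ dconv d (u \o phi) y.

Definition isom_on {R : realType} {X : Type} (d : X -> X -> R)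
  (I : set R) (f : R -> X) : Prop :=
  forall s t, I s -> I t -> d (f s) (f t) = `|s - t|.

Definition geod_seg {R : realType} {X : Type} (d : X -> X -> R)
  (f : R -> X) (l : R) : Prop :=
  0 <= l /\ isom_on d `[0, l] f.

Definition geod_from_to {R : realType} {X : Type} (d : X -> X -> R)
  (g : R -> X) (x y : X) : Prop :=
  g 0 = x /\ g (d x y) = y /\ geod_seg d g (d x y).

Definition is_geodesic_space {R : realType} {X : Type} (d : X -> X -> R) : Prop :=
  forall x y : X, exists g : R -> X, geod_from_to d g x y.

Definition geod_ray {R : realType} {X : Type} (d : X -> X -> R)
  (f : R -> X) : Prop := isom_on d `[0, +oo[ f.

Definition closed_interval {R : realType} (I : set R) : Prop :=
  I !=set0 /\ closed I /\
  (forall a b z, I a -> I b -> a <= z -> z <= b -> I z).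

(* a geodesic (segment, ray or line), seen as a subset of X *)
Definition geodesic_set {R : realType} {X : Type} (d : X -> X -> R)
  (U : set X) : Prop :=
  exists (I : set R) (f : R -> X),
    closed_interval I /\ isom_on d I f /\ U = f @` I.

Definition quasi_geodesic_set {R : realType} {X : Type} (d : X -> X -> R)
  (U : set X) : Prop :=
  exists (lam c : R) (I : set R) (f : R -> X),
    1 <= lam /\ 0 <= c /\ closed_interval I /\
    (forall s t, I s -> I t ->
        `|s - t| / lam - c <= d (f s) (f t) /\
        d (f s) (f t) <= lam * `|s - t| + c) /\
    U = f @` I.

Definition dclosed {R : realType} {X : Type} (d : X -> X -> R) (U : set X) : Prop :=
  forall x, (forall e : R, 0 < e -> exists u, U u /\ d x u < e) -> U x.

Definition dist_le {R : realType} {X : Type} (d : X -> X -> R)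
  (x : X) (U : set X) (r : R) : Prop :=
  forall e : R, 0 < e -> exists u, U u /\ d x u < r + e.

Definition set_dist_ge {R : realType} {X : Type} (d : X -> X -> R)
  (A U : set X) (c : R) : Prop :=
  forall a u, A a -> U u -> c <= d a u.

Definition diam_le {R : realType} {X : Type} (d : X -> X -> R)
  (S : set X) (c : R) : Prop :=
  forall a b, S a -> S b -> d a b <= c.

Definition diam_ge {R : realType} {X : Type} (d : X -> X -> R)
  (S : set X) (c : R) : Prop :=
  forall e : R, 0 < e -> exists a b, S a /\ S b /\ c - e < d a b.

Definition proj {R : realType} {X : Type} (d : X -> X -> R)
  (U A : set X) : set X :=
  [set u | U u /\ exists x, A x /\ forall v, U v -> d x u <= d x v].

Definition contracting {R : realType} {X : Type} (d : X -> X -> R)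
  (C : R) (U : set X) : Prop :=
  dclosed d U /\
  forall g : set X, geodesic_set d g -> set_dist_ge d g U C ->
    diam_le d (proj d U g) C.

Definition escaping {R : realType} {X : Type} (d : X -> X -> R)
  (A : nat -> set X) : Prop :=
  forall (o : X) (M : R), \forall n \near \oo, forall a, A n a -> M <= d o a.

Definition to_pinfty {R : realType} (t : nat -> R) : Prop :=
  forall M : R, \forall n \near \oo, M <= t n.

Definition Omega {R : realType} {X : Type} (d : X -> X -> R)
  (C : R) (o : X) (A : set X) : set X :=
  [set x | exists g : R -> X, geod_from_to d g o x /\
             diam_ge d ((g @` `[0, d o x]) `&` A) (10%:R * C)].

Definition boundary {X : Type} {Xbar : Type} (iota : X -> Xbar) : set Xbar :=
  ~` range iota.

Definition cls {X : Type} {Xbar : Type} (iota : X -> Xbar)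
  (rel : Xbar -> Xbar -> Prop) (xi : Xbar) : set Xbar :=
  [set eta | boundary iota eta /\ rel xi eta].

Definition accum_into {X : Type} {Xbar : topologicalType}
  (iota : X -> Xbar) (rel : Xbar -> Xbar -> Prop) (x : nat -> X) (xi : Xbar) : Prop :=
  cluster ((fun n => iota (x n)) @ \oo) `<=` cls iota rel xi.

Definition ends_at {R : realType} {X : Type} {Xbar : topologicalType}
  (iota : X -> Xbar) (rel : Xbar -> Xbar -> Prop) (g : R -> X) (xi : Xbar) : Prop :=
  forall t : nat -> R, (forall n, 0 <= t n) -> to_pinfty t ->
    accum_into iota rel (fun n => g (t n)) xi.

Definition isometry {R : realType} {X : Type} (d : X -> X -> R) (phi : X -> X) : Prop :=
  (forall x y, d (phi x) (phi y) = d x y) /\ (forall y, exists x, phi x = y).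

Definition homeomorphism {T : topologicalType} (F : T -> T) : Prop :=
  exists G : T -> T, cancel F G /\ cancel G F /\ continuous F /\ continuous G.

Definition compactification_with_partition {R : realType} {X : Type}
  (d : X -> X -> R) (Xbar : pseudoMetricType R) (iota : X -> Xbar)
  (rel : Xbar -> Xbar -> Prop) : Prop :=
  hausdorff_space Xbar /\ compact [set: Xbar] /\
  injective iota /\
  (* iota is continuous ... *)
  (forall (x : X) (N : set Xbar), nbhs (iota x) N ->
     exists e : R, 0 < e /\ forall y, d x y < e -> N (iota y)) /\
  (* ... and a homeomorphism onto its image *)
  (forall (x : X) (e : R), 0 < e ->
     exists N : set Xbar, nbhs (iota x) N /\ forall y, N (iota y) -> d x y < e) /\
  open (range iota) /\ closure (range iota) = [set: Xbar] /\
  (forall phi, isometry d phi ->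
     exists Phi : Xbar -> Xbar, homeomorphism Phi /\ forall x, Phi (iota x) = iota (phi x)) /\
  (forall xi, boundary iota xi -> rel xi xi) /\
  (forall xi eta, boundary iota xi -> boundary iota eta -> rel xi eta -> rel eta xi) /\
  (forall xi eta zeta, boundary iota xi -> boundary iota eta -> boundary iota zeta ->
     rel xi eta -> rel eta zeta -> rel xi zeta) /\
  (forall phi (Phi : Xbar -> Xbar), isometry d phi -> homeomorphism Phi ->
     (forall x, Phi (iota x) = iota (phi x)) ->
     forall xi eta, boundary iota xi -> boundary iota eta ->
       rel xi eta -> rel (Phi xi) (Phi eta)).

Definition assumption_A {R : realType} {X : Type}
  (d : X -> X -> R) (Xbar : pseudoMetricType R) (iota : X -> Xbar)
  (rel : Xbar -> Xbar -> Prop) : Prop :=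
  forall (C : R) (g : R -> X), 0 < C -> geod_ray d g ->
    contracting d C (g @` `[0, +oo[) ->
    exists xi : Xbar, boundary iota xi /\ closed (cls iota rel xi) /\
      ends_at iota rel g xi /\
      forall x : nat -> X,
        escaping d (fun n => proj d (g @` `[0, +oo[) [set x n]) ->
        accum_into iota rel x xi.

Definition assumption_B {R : realType} {X : Type}
  (d : X -> X -> R) (Xbar : pseudoMetricType R) (iota : X -> Xbar)
  (rel : Xbar -> Xbar -> Prop) : Prop :=
  forall (C : R) (o : X) (G : nat -> set X), 0 < C ->
    (forall n, quasi_geodesic_set d (G n) /\ contracting d C (G n)) ->
    escaping d G ->
    exists (phi : nat -> nat) (xi : Xbar),
      (forall n, (phi n < phi n.+1)%N) /\ boundary iota xi /\
      forall (x : nat -> X),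
        (forall n, (G (phi n) `|` Omega d C o (G (phi n))) (x n)) ->
        forall p : Xbar, (fun n => iota (x n)) @ \oo --> p ->
          cls iota rel xi p.

Definition convergence_compactification {R : realType} {X : Type}
  (d : X -> X -> R) (Xbar : pseudoMetricType R) (iota : X -> Xbar)
  (rel : Xbar -> Xbar -> Prop) : Prop :=
  compactification_with_partition d iota rel /\
  assumption_A d iota rel /\ assumption_B d iota rel.

Definition non_pinched {R : realType} {X : Type}
  (d : X -> X -> R) {Xbar : topologicalType} (iota : X -> Xbar)
  (rel : Xbar -> Xbar -> Prop) (xi : Xbar) : Prop :=
  forall (x y : nat -> X) (g : nat -> R -> X),
    accum_into iota rel x xi -> accum_into iota rel y xi ->
    (forall n, geod_from_to d (g n) (x n) (y n)) ->
    escaping d (fun n => g n @` `[0, d (x n) (y n)]).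

Definition seg_contracting_freq {R : realType} {X : Type} (d : X -> X -> R)
  (r C L theta : R) (gamma : R -> X) (l : R) : Prop :=
  forall t : R, 0 < t -> t < (1 - theta) * l ->
    exists (s : R) (p : set X),
      `[s - L / 2, s + L / 2] `<=` `[t, t + theta * l] /\
      geodesic_set d p /\ contracting d C p /\
      forall u, s - L / 2 <= u -> u <= s + L / 2 -> dist_le d (gamma u) p r.

Definition ray_contracting_freq {R : realType} {X : Type} (d : X -> X -> R)
  (r C L theta : R) (gamma : R -> X) : Prop :=
  exists R0 : R, forall t, R0 <= t -> seg_contracting_freq d r C L theta gamma t.

(* Main.v *)
Require Import Defs.
From HB Require Import structures.
From mathcomp Require Import all_boot all_order all_algebra.
From mathcomp Require Import all_classical all_reals all_analysis.
From mathcomp Require Import lra ring.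
Import numFieldTopology.Exports numFieldNormedType.Exports.
Import Order.TTheory GRing.Theory Num.Theory.
Local Open Scope classical_set_scope.
Local Open Scope ring_scope.

Section Geo.
Context {R : realType} {X : Type} (d : X -> X -> R) (dm : is_metric d).

Lemma d_sym x y : d x y = d y x. Proof. by case: dm => _ []. Qed.
Lemma d_tri x y z : d x z <= d x y + d y z. Proof. by case: dm => _ []. Qed.
Lemma d_xx x : d x x = 0. Proof. by case: dm => /(_ x x) [] _ ->. Qed.
Lemma d_ge0 x y : 0 <= d x y.
Proof.
have := d_tri x y x; rewrite d_xx (d_sym y x); lra.
Qed.

Lemma itvP (a b x : R) : `[a, b]%classic x <-> a <= x <= b.
Proof. by rewrite /= in_itv /=. Qed.

Definition isproj (p : set X) x xs := p xs /\ forall v, p v -> d x xs <= d x v.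

Lemma geod_sub (c1 c2 : R) f : c1 <= c2 -> isom_on d `[c1, c2] f ->
  geodesic_set d (f @` `[c1, c2]).
Proof.
move=> c12 fi; exists `[c1, c2]%classic, f; split; last by split.
split; first by exists c1; apply/itvP; rewrite lexx c12.
split; first exact: itv_closed.
by move=> a b z /itvP/andP[a1 _] /itvP/andP[_ b2] az zb; apply/itvP;
  rewrite (le_trans a1 az) (le_trans zb b2).
Qed.

Lemma isom_rev (c1 c2 : R) f : isom_on d `[c1, c2] f ->
  isom_on d `[c1, c2] (fun s => f (c1 + c2 - s)).
Proof.
move=> fi s t /itvP/andP[s1 s2] /itvP/andP[t1 t2].
rewrite fi; last by apply/itvP; apply/andP; split; lra.
  by rewrite distrC; congr `|_|; ring.
by apply/itvP; apply/andP; split; lra.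
Qed.

Lemma isom_mono (I J : set R) f : J `<=` I -> isom_on d I f -> isom_on d J f.
Proof. by move=> JI fi s t /JI Is /JI It; apply: fi. Qed.


Lemma distle (a b : R) : a <= b -> `|a - b| = b - a.
Proof. by move=> ab; rewrite distrC ger0_norm // subr_ge0. Qed.

Lemma isomE (c1 c2 : R) f a b : isom_on d `[c1, c2] f -> c1 <= a <= c2 -> c1 <= b <= c2 ->
  a <= b -> d (f a) (f b) = b - a.
Proof. by move=> fi ha hb ab; rewrite fi ?distle //; apply/itvP. Qed.

Arguments isomE {c1 c2 f a b}.
Arguments isom_mono {I J f}.
Arguments geod_sub {c1 c2 f}.
Arguments isom_rev {c1 c2 f}.

Lemma passH C p f (c1 c2 K : R) xs v0 :
  0 < C -> 0 <= K -> contracting d C p -> c1 <= c2 -> isom_on d `[c1, c2] f ->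
  (forall x, exists xs, isproj p x xs) ->
  p v0 -> d (f c2) v0 <= K -> isproj p (f c1) xs ->
  exists s, c1 <= s <= c2 /\ d (f s) xs <= K + 4 * C.
Proof.
move=> C0 K0 [pcl pcon] c12 fi pex pv0 dv0 [pxs xsmin].
pose S := [set s | c1 <= s <= c2 /\ exists v, p v /\ d (f s) v < K + C].
have Sc2 : S c2 by split; [rewrite c12 lexx | exists v0; split => //; lra].
have hlb : lbound S c1 by move=> s [/andP[]].
have hS : has_inf S by split; [exists c2 | exists c1].
have c1sb : c1 <= inf S := lb_le_inf (ex_intro _ c2 Sc2) hlb.
have sbc2 : inf S <= c2 := ge_inf hS.2 Sc2.
have [s' Ss' s'lt] := inf_adherent C0 hS.
have sbs' : inf S <= s' := ge_inf hS.2 Ss'.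
case: Ss' => /andP[s'1 s'2] [v' [pv' dv']].
case: (ltP (inf S) (c1 + C)) => hsb.
  exists c1; split; first by rewrite lexx c12.
  have h1 := xsmin v' pv'.
  have h2 := d_tri (f c1) (f s') v'.
  rewrite (isomE fi) ?lexx ?c12 ?s'1 ?s'2 // in h2; lra.
have hs1 : c1 <= inf S - C <= c2 by apply/andP; split; lra.
exists (inf S - C); split => //.
have [ss [pss ssmin]] := pex (f (inf S - C)).
have sd : set_dist_ge d (f @` `[c1, inf S - C]) p C.
  move=> a u [σ /itvP/andP[hσ1 hσ2] <-] pu; rewrite leNgt; apply/negP => hlt.
  have : S σ by split; [apply/andP; split; lra | exists u; split => //; lra].
  move/(ge_inf hS.2); lra.
have gs : geodesic_set d (f @` `[c1, inf S - C]).
  apply: geod_sub; first lra.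
  apply: (isom_mono _ fi) => z /itvP/andP[z1 z2]; apply/itvP/andP; split; lra.
have hxs : Defs.proj d p (f @` `[c1, inf S - C]) xs.
  split => //; exists (f c1); split => //; exists c1 => //; apply/itvP/andP; split; lra.
have hss : Defs.proj d p (f @` `[c1, inf S - C]) ss.
  split => //; exists (f (inf S - C)); split => //; exists (inf S - C) => //; apply/itvP/andP; split; lra.
have h1 := pcon _ gs sd _ _ hxs hss.
have h2 := ssmin v' pv'.
have h3 := d_tri (f (inf S - C)) (f s') v'.
have e3 : d (f (inf S - C)) (f s') = s' - (inf S - C).
  by apply: (isomE fi) => //; [rewrite s'1 s'2 | lra].
have h4 := d_tri (f (inf S - C)) ss xs.
rewrite (d_sym ss xs) in h4; lra.
Qed.

Lemma passK C p f (c1 c2 : R) xs ys : 0 < C -> contracting d C p -> c1 <= c2 ->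
  isom_on d `[c1, c2] f -> (forall x, exists xs, isproj p x xs) ->
  isproj p (f c1) xs -> isproj p (f c2) ys -> C < d xs ys ->
  exists s, c1 <= s <= c2 /\ d (f s) xs <= 5 * C.
Proof.
move=> C0 pc c12 fi pex hx hy dxy.
case: (pselect (exists σ, c1 <= σ <= c2 /\ exists v, p v /\ d (f σ) v < C)).
  case=> σ [/andP[σ1 σ2] [v [pv dv]]].
  have fi' : isom_on d `[c1, σ] f.
    apply: (isom_mono _ fi) => z /itvP/andP[z1 z2]; apply/itvP/andP; split; lra.
  have [s [/andP[s1 s2] ds]] := @passH C p f c1 σ C xs v C0 (ltW C0) pc σ1 fi' pex pv (ltW dv) hx.
  exists s; split; [apply/andP; split; lra | lra].
move=> nos; exfalso.
have sd : set_dist_ge d (f @` `[c1, c2]) p C.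
  move=> a u [σ /itvP hσ <-] pu; rewrite leNgt; apply/negP => hlt.
  by apply: nos; exists σ; split => //; exists u; split.
have hxs : Defs.proj d p (f @` `[c1, c2]) xs.
  case: hx => px hx; split => //; exists (f c1); split => //; exists c1 => //; apply/itvP; by rewrite lexx c12.
have hys : Defs.proj d p (f @` `[c1, c2]) ys.
  case: hy => py hy; split => //; exists (f c2); split => //; exists c2 => //; apply/itvP; by rewrite lexx c12.
have := pc.2 _ (geod_sub c12 fi) sd _ _ hxs hys; lra.
Qed.

Lemma passM C p f (c1 c2 K t : R) v1 v2 : 0 < C -> 0 <= K -> contracting d C p ->
  c1 <= t <= c2 -> isom_on d `[c1, c2] f -> (forall x, exists xs, isproj p x xs) ->
  p v1 -> d (f c1) v1 <= K -> p v2 -> d (f c2) v2 <= K ->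
  exists v, p v /\ d (f t) v <= 2 * K + 8 * C.
Proof.
move=> C0 K0 pc /andP[t1 t2] fi pex pv1 dv1 pv2 dv2.
have [ts hts] := pex (f t).
have fiR : isom_on d `[t, c2] f.
  apply: (isom_mono _ fi) => z /itvP/andP[z1 z2]; apply/itvP/andP; split; lra.
have [sR [/andP[sR1 sR2] dR]] := @passH C p f t c2 K ts v2 C0 K0 pc t2 fiR pex pv2 dv2 hts.
have fiL : isom_on d `[c1, t] (fun s => f (c1 + t - s)).
  apply: isom_rev; apply: (isom_mono _ fi) => z /itvP/andP[z1 z2]; apply/itvP/andP; split; lra.
have hts' : isproj p (f (c1 + t - c1)) ts by have -> : c1 + t - c1 = t by ring.
have dv1' : d (f (c1 + t - t)) v1 <= K by have -> : c1 + t - t = c1 by ring.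
have [σ [/andP[σ1 σ2] dL]] := @passH C p (fun s => f (c1 + t - s)) c1 t K ts v1 C0 K0 pc t1 fiL pex pv1 dv1' hts'.
move: dL; set sL := c1 + t - σ => dL /=.
have eLR : d (f sL) (f sR) = sR - sL.
  by apply: (isomE fi); [apply/andP; split; rewrite /sL; lra | apply/andP; split; lra | rewrite /sL; lra].
have hLR := d_tri (f sL) ts (f sR).
rewrite (d_sym ts (f sR)) in hLR.
exists ts; split; first by case: hts.
case: (lerP (t - sL) (K + 4 * C)) => h.
  have eL : d (f t) (f sL) = t - sL.
    rewrite d_sym; apply: (isomE fi); [apply/andP; split; rewrite /sL; lra | apply/andP; split; lra | rewrite /sL; lra].
  have := d_tri (f t) (f sL) ts; lra.
have eR : d (f t) (f sR) = sR - t.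
  by apply: (isomE fi); [apply/andP; split; lra | apply/andP; split; lra | lra].
have := d_tri (f t) (f sR) ts; lra.
Qed.

Lemma inv_small (e : R) : 0 < e -> exists N : nat, forall n, (N <= n)%N -> (n.+1%:R)^-1 < e.
Proof.
move=> e0; exists (Num.bound e^-1) => n Nn.
rewrite invf_plt ?posrE ?ltr0Sn //.
apply: (lt_le_trans (archi_boundP _)); first by rewrite invr_ge0 ltW.
by rewrite ler_nat; apply: leq_trans Nn _.
Qed.

Lemma mono_ge (phi : nat -> nat) : (forall n, (phi n < phi n.+1)%N) -> forall n, (n <= phi n)%N.
Proof. by move=> h; elim=> // n ih; apply: leq_ltn_trans ih (h n). Qed.

Lemma projex : is_proper d -> forall p, dclosed d p -> p !=set0 ->
  forall x, exists xs, isproj p x xs.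
Proof.
move=> prop p pcl [v0 pv0] x.
pose E := [set d x v | v in p].
have hE : has_inf E.
  split; first by exists (d x v0), v0.
  by exists 0 => _ [v _ <-]; apply: d_ge0.
have mle : forall v, p v -> inf E <= d x v.
  by move=> v pv; apply: (ge_inf hE.2); exists v.
have : forall n : nat, exists v, p v /\ d x v < inf E + (n.+1%:R)^-1.
  move=> n; have [e [v pv <-] lt] := @inf_adherent R E (n.+1%:R^-1) (ltac:(by rewrite invr_gt0 ltr0Sn)) hE.
  by exists v.
case/choice => u hu.
have bnd : forall n, d x (u n) <= inf E + 1.
  move=> n; have [_ h] := hu n; apply/ltW/(lt_le_trans h).
  by rewrite lerD2l invf_le1 ?ltr0Sn // ler1n.
have [phi [y [phimono [_ cv]]]] := prop x (inf E + 1) u bnd.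
have py : p y.
  apply: pcl => e e0.
  have [N _ HN] := cvgr_lt _ cv e e0.
  exists (u (phi N)); split; first by case: (hu (phi N)).
  by rewrite d_sym; apply: (HN N); rewrite /= leqnn.
exists y; split => // w pw; apply: le_trans (mle w pw).
rewrite leNgt; apply/negP => hlt.
pose e := d x y - inf E.
have e2 : 0 < e / 2 by rewrite divr_gt0 // /e subr_gt0.
have [N1 _ HN1] := cvgr_lt _ cv (e / 2) e2.
have [N2 HN2] := inv_small (e / 2) e2.
pose n := maxn N1 N2.
have h1 : d (u (phi n)) y < e / 2 by apply: (HN1 n); rewrite /= leq_maxl.
have h2 : ((phi n).+1%:R)^-1 < e / 2.
  by apply: HN2; apply: (@leq_trans n); [rewrite leq_maxr | exact: mono_ge].
have [_ h3] := hu (phi n).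
have h4 : d x (u (phi n)) < inf E + e / 2 by apply: (lt_trans h3); rewrite ltrD2l.
have := d_tri x (u (phi n)) y; rewrite /e in h1 h4; lra.
Qed.

Lemma rayE f (s t : R) : geod_ray d f -> 0 <= s -> 0 <= t -> d (f s) (f t) = `|s - t|.
Proof. by move=> fr s0 t0; apply: fr; rewrite /= in_itv /= andbT. Qed.

Lemma ray_isom f (c1 c2 : R) : geod_ray d f -> 0 <= c1 -> isom_on d `[c1, c2] f.
Proof.
move=> fr c10 s t /itvP/andP[s1 _] /itvP/andP[t1 _].
apply: rayE => //; apply: le_trans c10 _ => //.
Qed.

Lemma rayO f o (t : R) : geod_ray d f -> f 0 = o -> 0 <= t -> d o (f t) = t.
Proof. by move=> fr <- t0; rewrite rayE // ?lexx // distrC subr0 ger0_norm. Qed.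

Arguments rayE {f s t}.
Arguments rayO {f o t}.
Arguments ray_isom {f c1 c2}.

Lemma window C p (r' a b N : R) o gam bet g :
  0 < C -> 0 <= r' -> contracting d C p -> (forall x, exists xs, isproj p x xs) ->
  geod_ray d gam -> gam 0 = o -> geod_ray d bet -> bet 0 = o ->
  0 <= a -> a <= b -> b <= N -> 2 * r' + 6 * C < b - a ->
  (forall u, a <= u <= b -> exists v, p v /\ d (gam u) v <= r') ->
  geod_from_to d g (bet N) (gam N) ->
  (forall z, (g @` `[0, d (bet N) (gam N)]) z -> b <= d o z) ->
  forall u, a <= u <= b -> exists v, p v /\ d (bet u) v <= r' + 18 * C.
Proof.
move=> C0 r0 pc pex gr g0 br b0 a0 ab bN Lbig near [g0e [gle [l0 gi]]] esc.
have b0' : 0 <= b by lra.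
have N0 : 0 <= N by lra.
have [va [pva dva]] : exists v, p v /\ d (gam a) v <= r' by apply: near; rewrite lexx ab.
have [xs hxs] := pex o.
have hA : d o xs <= a + r'.
  have := hxs.2 va pva; have := d_tri o (gam a) va; rewrite (rayO gr g0 a0); lra.
have [vb [pvb dvb]] : exists v, p v /\ d (gam b) v <= r' by apply: near; rewrite lexx ab.
have [ygs hyg] := pex (gam N).
have hB : b - r' - 4 * C <= d o ygs.
  have fi : isom_on d `[b, N] (fun s => gam (b + N - s)) by apply: isom_rev; apply: ray_isom.
  have hyg' : isproj p (gam (b + N - b)) ygs by have -> : b + N - b = N by ring.
  have dvb' : d (gam (b + N - N)) vb <= r' by have -> : b + N - N = b by ring.
  have [s [/andP[s1 s2] ds]] := @passH C p (fun s => gam (b + N - s)) b N r' ygs vb C0 r0 pc bN fi pex pvb dvb' hyg'.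
  have e0 : 0 <= b + N - s by lra.
  have := d_tri o ygs (gam (b + N - s)); rewrite (rayO gr g0 e0) (d_sym ygs); lra.
have [ys hys] := pex (bet N).
set l := d (bet N) (gam N) in gle l0 gi esc.
have hC : b - r' - 5 * C <= d o ys.
  case: (pselect (exists σ, 0 <= σ <= l /\ exists v, p v /\ d (g σ) v < C)).
    case=> σ [/andP[σ1 σ2] [v [pv dv]]].
    have fi' : isom_on d `[0, σ] g.
      apply: (isom_mono _ gi) => z /itvP/andP[z1 z2]; apply/itvP/andP; split; lra.
    have hys' : isproj p (g 0) ys by rewrite g0e.
    have [s [/andP[s1 s2] ds]] := @passH C p g 0 σ C ys v C0 (ltW C0) pc σ1 fi' pex pv (ltW dv) hys'.
    have := esc (g s); have := d_tri o ys (g s); rewrite (d_sym ys (g s)).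
    have : (g @` `[0, l]) (g s) by exists s => //; apply/itvP/andP; split; lra.
    move=> gs h1 /(_ gs) h2; lra.
  move=> nos.
  have sd : set_dist_ge d (g @` `[0, l]) p C.
    move=> z u [σ /itvP hσ <-] pu; rewrite leNgt; apply/negP => hlt.
    by apply: nos; exists σ; split => //; exists u; split.
  have hp1 : Defs.proj d p (g @` `[0, l]) ys.
    case: hys => py hy; split => //; exists (g 0); split; last by rewrite g0e.
    by exists 0 => //; apply/itvP; rewrite lexx l0.
  have hp2 : Defs.proj d p (g @` `[0, l]) ygs.
    case: hyg => py hy; split => //; exists (g l); split; last by rewrite gle.
    by exists l => //; apply/itvP; rewrite lexx l0.
  have := pc.2 _ (geod_sub l0 gi) sd _ _ hp1 hp2.
  have := d_tri o ys ygs; lra.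
have hD : C < d xs ys by have := d_tri o xs ys; lra.
have bi : isom_on d `[0, N] bet by apply: ray_isom => //.
have hxs' : isproj p (bet 0) xs by rewrite b0.
have [t1 [/andP[t11 t12] dt1]] := @passK C p bet 0 N xs ys C0 pc N0 bi pex hxs' hys hD.
have bri : isom_on d `[0, N] (fun s => bet (0 + N - s)) by apply: isom_rev.
have hys' : isproj p (bet (0 + N - 0)) ys by have -> : 0 + N - 0 = N by ring.
have hxs'' : isproj p (bet (0 + N - N)) xs by have -> : 0 + N - N = 0 by ring; rewrite b0.
have hD' : C < d ys xs by rewrite d_sym.
have [s2 [/andP[s21 s22] dt2]] := @passK C p (fun s => bet (0 + N - s)) 0 N ys xs C0 pc N0 bri pex hys' hxs'' hD'.
move: dt2; set t2 := 0 + N - s2 => /= dt2.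
have t20 : 0 <= t2 by rewrite /t2; lra.
have ht1 : t1 <= a + r' + 5 * C.
  have := d_tri o xs (bet t1); rewrite (rayO br b0 t11) (d_sym xs); lra.
have ht2 : b - r' - 10 * C <= t2.
  have := d_tri o (bet t2) ys; rewrite (rayO br b0 t20); lra.
have pxs := hxs.1.
have pys := hys.1.
move=> u /andP[ua ub].
have u0 : 0 <= u by lra.
case: (lerP u t1) => h1; case: (lerP u t2) => h2.
- exists xs; split => //.
  have := d_tri (bet u) (bet t1) xs; rewrite rayE // distrC ger0_norm; lra.
- have bi2 : isom_on d `[t2, t1] bet by apply: ray_isom.
  have [v [pv dv]] := @passM C p bet t2 t1 (5 * C) u ys xs C0 (ltac:(lra)) pc (ltac:(apply/andP; split; lra)) bi2 pex pys dt2 pxs dt1.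
  by exists v; split => //; lra.
- have bi2 : isom_on d `[t1, t2] bet by apply: ray_isom.
  have [v [pv dv]] := @passM C p bet t1 t2 (5 * C) u xs ys C0 (ltac:(lra)) pc (ltac:(apply/andP; split; lra)) bi2 pex pxs dt1 pys dt2.
  by exists v; split => //; lra.
- exists ys; split => //.
  have := d_tri (bet u) (bet t2) ys; rewrite rayE // ger0_norm; lra.
Qed.

End Geo.

Theorem lemma2p24 (R : realType) (X : Type) (d : X -> X -> R)
  (Xbar : pseudoMetricType R) (iota : X -> Xbar) (rel : Xbar -> Xbar -> Prop) :
  is_metric d -> is_proper d -> is_geodesic_space d ->
  convergence_compactification d iota rel ->
  forall r C : R, 0 < C -> C <= r ->
  exists rhat L0 : R,
    forall (L theta : R) (o : X) (gamma : R -> X) (xi : Xbar),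
      L0 <= L -> 0 < theta -> theta <= 1 ->
      geod_ray d gamma -> gamma 0 = o ->
      ray_contracting_freq d r C L theta gamma ->
      boundary iota xi -> ends_at iota rel gamma xi ->
      (forall eta, cls iota rel xi eta -> non_pinched d iota rel eta) ->
      forall beta : R -> X,
        geod_ray d beta -> beta 0 = o -> ends_at iota rel beta xi ->
        ray_contracting_freq d rhat C L theta beta.
Proof.
move=> dm prop geo [[_ [_ [_ [_ [_ [_ [_ [_ [rrefl _]]]]]]]]] _] r C C0 Cr.
exists (r + C + 18 * C), (2 * (r + C) + 7 * C).
move=> L theta o gam xi L0L th0 th1 gr g0 [R0 hR0] bxi gend npall bet br b0 bend.
exists R0 => l Rl t t0 tlt.
have [s [p [sub [pg [pc hp]]]]] := hR0 l Rl t t0 tlt.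
exists s, p; split => //; split => //; split => //.
move=> u us1 us2.
have ab : s - L / 2 <= s + L / 2 by lra.
have a0 : 0 <= s - L / 2.
  have /sub/itvP/andP[h _] : `[s - L / 2, s + L / 2]%classic (s - L / 2).
    by apply/itvP; rewrite lexx ab.
  lra.
have near : forall u, s - L / 2 <= u <= s + L / 2 -> exists v, p v /\ d (gam u) v <= r + C.
  move=> w /andP[w1 w2]; have [v [pv dv]] := hp w w1 w2 C C0.
  by exists v; split => //; apply: ltW.
have pne : p !=set0.
  have [v [pv _]] := near (s - L / 2) (ltac:(by rewrite lexx ab)).
  by exists v.
have pex := @projex R X d dm prop p pc.1 pne.
have np := npall xi (conj bxi (rrefl xi bxi)).
have [gg hgg] := choice (fun n : nat => geo (bet n%:R) (gam n%:R)).
have acc_b : accum_into iota rel (fun n : nat => bet n%:R) xi.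
  by apply: (bend (fun n : nat => n%:R)) => // M; apply: nbhs_infty_ger.
have acc_g : accum_into iota rel (fun n : nat => gam n%:R) xi.
  by apply: (gend (fun n : nat => n%:R)) => // M; apply: nbhs_infty_ger.
have [N1 _ HN1] := np _ _ gg acc_b acc_g hgg o (s + L / 2).
have [N2 _ HN2] := nbhs_infty_ger (s + L / 2).
pose n := maxn N1 N2.
have hn1 := HN1 n (leq_maxl N1 N2).
have hn2 : s + L / 2 <= n%:R := HN2 n (leq_maxr N1 N2).
have r0 : 0 <= r + C by lra.
have [v [pv dv]] := @window R X d dm C p (r + C) (s - L / 2) (s + L / 2) n%:R o gam bet (gg n)
  C0 r0 pc pex gr g0 br b0 a0 ab hn2 (ltac:(lra)) near (hgg n) hn1 u (ltac:(by rewrite us1 us2)).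
move=> e e0; exists v; split => //; lra.
Qed.
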